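(* Let $M$ and $M'$ be matchings of $X_{2k}$. Then $M$ and $M'$ are disjoint compatible if and only if there is a partition of $M$ into flippable sets whose convex hulls (of their endpoint sets) are pairwise disjoint, such that $M'$ is obtained from $M$ by flipping every set of this partition. Moreover, this partition is uniquely determined by $M$ and $M'$.
   Context: Let $k\ge 1$ and let $X_{2k}=\{P_1,\dots,P_{2k}\}$ be $2k$ points in convex position in the plane, labeled in clockwise cyclic order; indices are taken modulo $2k$. A matching of $X_{2k}$ means a set of $k$ pairwise non-crossing straight segments (edges) with endpoints in $X_{2k}$ covering every point exactly once. Two matchings $M,M'$ of $X_{2k}$ are disjoint compatible if they have no common edge and no edge of $M$ crosses an edge of $M'$. Flippable set: let $M$ be a matching and $N\subseteq M$ with $|N|=m\ge 2$; let $Y$ be the set of the $2m$ endpoints of edges of $N$, labeled $Q_1,\dots,Q_{2m}$ in the cyclic order inherited from $X_{2k}$ (for a suitable choice of $Q_1$). $N$ is a flippable set if $N=\{Q_1Q_2,Q_3Q_4,\dots,Q_{2m-1}Q_{2m}\}$ and the convex hull of $Y$ intersects no edge of $M\setminus N$. Flipping $N$ means replacing $N$ by $\{Q_2Q_3,Q_4Q_5,\dots,Q_{2m-2}Q_{2m-1},Q_{2m}Q_1\}$. *)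

(* Defs.v *)
(* Combinatorial model of 2k points in convex position:
   point i : 'I_n is P_{i+1}; the labels follow the clockwise cyclic order. *)
From mathcomp Require Import all_boot.
Set Implicit Arguments. Unset Strict Implicit. Unset Printing Implicit Defensive.

Section ConvexMatchings.
Variable n : nat.
Local Notation pt := 'I_n.
Local Notation edge := {set pt}.

(* The (closed) straight segments with endpoint sets e and f cross (have a
   common point) while having four distinct endpoints: for points in convex
   position, this happens iff the endpoints interleave in the cyclic order. *)
Definition crosses (e f : edge) : bool :=
  [exists a : pt, exists b : pt, exists c : pt, exists d : pt,
    [&& (val a < val c)%N, (val c < val b)%N, (val b < val d)%N &
        ((e == [set a; b]) && (f == [set c; d]))
        || ((e == [set c; d]) && (f == [set a; b]))]].

Definition matching (M : {set edge}) : bool :=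
  [&& [forall e in M, #|e| == 2],
      [forall x : pt, #|[set e in M | x \in e]| == 1] &
      [forall e in M, forall f in M, ~~ crosses e f]].

Definition disjoint_compatible (M M' : {set edge}) : bool :=
  [disjoint M & M'] && [forall e in M, forall f in M', ~~ crosses e f].

(* Q_1, ..., Q_{2m}: the points of Y in cyclic (clockwise) order, starting
   at q (the "suitable choice of Q_1"); Q_{j+1} = nth q (Qseq Y q) j. *)
Definition Qseq (Y : {set pt}) (q : pt) : seq pt :=
  rot (index q (enum Y)) (enum Y).

Definition pairs0 (N : {set edge}) (q : pt) : {set edge} :=
  let Qs := Qseq (cover N) q in
  [set [set nth q Qs i.*2; nth q Qs i.*2.+1] | i : 'I_#|N|].

Definition pairs1 (N : {set edge}) (q : pt) : {set edge} :=
  let Qs := Qseq (cover N) q in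
  [set [set nth q Qs i.*2.+1; nth q Qs (i.*2.+2 %% size Qs)] | i : 'I_#|N|].

(* The segment e meets the convex hull of Y (e's endpoints not in Y):
   for points in convex position, iff e separates two points of Y. *)
Definition hull_meets (e : edge) (Y : {set pt}) : bool :=
  [exists y1 in Y, exists y2 in Y, crosses e [set y1; y2]].

(* The convex hulls of two disjoint subsets Y1, Y2 of points in convex
   position are disjoint iff no chord of Y1 crosses a chord of Y2. *)
Definition hulls_disjoint (Y1 Y2 : {set pt}) : bool :=
  ~~ [exists a in Y1, exists b in Y1, exists c in Y2, exists d in Y2,
        crosses [set a; b] [set c; d]].

Definition flippable (M N : {set edge}) : bool :=
  [&& N \subset M, (1 < #|N|)%N,
      [exists q in cover N, N == pairs0 N q] &
      [forall e in M :\: N, ~~ hull_meets e (cover N)]].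

(* Flipping N (well defined for a flippable set: any admissible Q_1 gives
   the same result). *)
Definition flip (N : {set edge}) : {set edge} :=
  if [pick q in cover N | N == pairs0 N q] is Some q then pairs1 N q
  else set0.

Definition flip_partition (M M' : {set edge}) (P : {set {set edge}}) : Prop :=
  [/\ partition P M,
      forall N, N \in P -> flippable M N,
      forall N1 N2, N1 \in P -> N2 \in P -> N1 != N2 ->
        hulls_disjoint (cover N1) (cover N2)
    & M' = \bigcup_(N in P) flip N].

End ConvexMatchings.

(* Main.v *)
Require Import Defs.
From mathcomp Require Import all_boot.
From mathcomp Require Import zify.
Set Implicit Arguments. Unset Strict Implicit. Unset Printing Implicit Defensive.


Section Cross.
Variable n : nat.
Local Notation pt := 'I_n.

Definition inside (a b y : pt) := (minn (a : nat) (b : nat) < (y : nat) < maxn (a : nat) (b : nat))%N.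
Definition outside (a b y : pt) := ((y : nat) < minn (a : nat) (b : nat))%N || (maxn (a : nat) (b : nat) < (y : nat))%N.

Lemma crosses_intro (a b c d : pt) : ((a : nat) < (c : nat))%N -> ((c : nat) < (b : nat))%N -> ((b : nat) < (d : nat))%N ->
  crosses [set a; b] [set c; d].
Proof.
move=> h1 h2 h3; apply/existsP; exists a; apply/existsP; exists b;
apply/existsP; exists c; apply/existsP; exists d.
by apply/and4P; split => //; rewrite !eqxx.
Qed.

Lemma crossesC (e f : {set pt}) : crosses e f = crosses f e.
Proof.
by apply/idP/idP => /existsP[a /existsP[b /existsP[c /existsP[d /and4P[h1 h2 h3 H]]]]];
apply/existsP; exists a; apply/existsP; exists b;
apply/existsP; exists c; apply/existsP; exists d; rewrite h1 h2 h3 /=;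
case/orP: H => /andP[-> ->]; rewrite ?orbT.
Qed.

Lemma cross_io (a b c d : pt) : inside a b c -> outside a b d ->
  crosses [set a; b] [set c; d].
Proof.
rewrite /inside /outside => hi ho.
case: (ltngtP (a : nat) (b : nat)) => hab.
- have e1 : minn (a : nat) (b : nat) = (a : nat) by lia.
  have e2 : maxn (a : nat) (b : nat) = (b : nat) by lia.
  rewrite e1 e2 in hi ho; case/andP: hi => h1 h2.
  case/orP: ho => hd.
  + by rewrite crossesC [[set c; d]]setUC; apply: crosses_intro.
  + exact: crosses_intro.
- have e1 : minn (a : nat) (b : nat) = (b : nat) by lia.
  have e2 : maxn (a : nat) (b : nat) = (a : nat) by lia.
  rewrite e1 e2 in hi ho; case/andP: hi => h1 h2.
  rewrite [[set a; b]]setUC.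
  case/orP: ho => hd.
  + by rewrite crossesC [[set c; d]]setUC; apply: crosses_intro.
  + exact: crosses_intro.
- by move: hi; rewrite hab; lia.
Qed.

Lemma crossesE (e f : {set pt}) : crosses e f -> exists a b c d,
  [/\ e = [set a; b], f = [set c; d], inside a b c & outside a b d].
Proof.
move=> /existsP[a /existsP[b /existsP[c /existsP[d /and4P[h1 h2 h3 H]]]]].
have h1' : (a < c)%N := h1. have h2' : (c < b)%N := h2. have h3' : (b < d)%N := h3.
clear h1 h2 h3; case/orP: H => /andP[/eqP -> /eqP ->].
- exists a, b, c, d; split => //; rewrite /inside /outside; lia.
- exists c, d, b, a; split => //; [by rewrite setUC| |]; rewrite /inside /outside; lia.
Qed.

Lemma io_cover (a b y : pt) : y != a -> y != b -> inside a b y || outside a b y.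
Proof.
move=> ha hb.
have ha' : (y : nat) <> (a : nat) by move=> E; move/eqP: ha; apply; apply: val_inj.
have hb' : (y : nat) <> (b : nat) by move=> E; move/eqP: hb; apply; apply: val_inj.
rewrite /inside /outside; lia.
Qed.

Lemma io_excl (a b y : pt) : inside a b y -> outside a b y -> False.
Proof. rewrite /inside /outside; lia. Qed.

Lemma inside_l (a b : pt) : inside a b a = false.
Proof. rewrite /inside; lia. Qed.
Lemma inside_r (a b : pt) : inside a b b = false.
Proof. rewrite /inside; lia. Qed.
Lemma outside_l (a b : pt) : outside a b a = false.
Proof. rewrite /outside; lia. Qed.
Lemma outside_r (a b : pt) : outside a b b = false.
Proof. rewrite /outside; lia. Qed.

Lemma set2_eqE (a b u w : pt) : [set a; b] = [set u; w] ->
  (a = u /\ b = w) \/ (a = w /\ b = u).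
Proof.
move=> E.
have ha : a \in [set u; w] by rewrite -E set21.
have hb : b \in [set u; w] by rewrite -E set22.
have hu : u \in [set a; b] by rewrite E set21.
have hw : w \in [set a; b] by rewrite E set22.
case/set2P: ha => ?; case/set2P: hb => ?; case/set2P: hu => ?;
case/set2P: hw => ?; subst; auto.
Qed.

Lemma inside_set2 (a b u w : pt) : [set a; b] = [set u; w] -> inside a b =1 inside u w.
Proof.
by case/set2_eqE => -[-> ->] y //; rewrite /inside minnC maxnC.
Qed.
Lemma outside_set2 (a b u w : pt) : [set a; b] = [set u; w] -> outside a b =1 outside u w.
Proof.
by case/set2_eqE => -[-> ->] y //; rewrite /outside minnC maxnC.
Qed.

End Cross.

Lemma next_nth_mod (T : eqType) (t : seq T) x0 j : uniq t -> (j < size t)%N ->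
  next t (nth x0 t j) = nth x0 t (j.+1 %% size t).
Proof.
case: t => [|y t'] // Ut hj.
rewrite next_nth (mem_nth _ hj) (index_uniq _ hj Ut) /=.
move: hj; rewrite /= ltnS leq_eqVlt => /orP[/eqP ->|hj].
- by rewrite modnn /= nth_default.
- by rewrite modn_small //= (set_nth_default x0).
Qed.

Section Sorted.
Variable n : nat.
Local Notation pt := 'I_n.

Lemma next_nth_modp (t : seq pt) (x0 : pt) j : uniq t -> (j < size t)%N ->
  next t (nth x0 t j) = nth x0 t (j.+1 %% size t).
Proof. exact: next_nth_mod. Qed.

Lemma sorted_enum (Y : {set pt}) : sorted (fun u v : pt => (u : nat) < (v : nat))%N (enum Y).
Proof.
rewrite /enum_mem -enumT; apply: sorted_filter.
  by move=> x y z; apply: ltn_trans.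
by have := iota_ltn_sorted 0 n; rewrite -val_enum_ord sorted_map.
Qed.

Lemma nth_lt (s : seq pt) x0 i j : sorted (fun u v : pt => (u : nat) < (v : nat))%N s ->
  (i < j)%N -> (j < size s)%N ->
  ((nth x0 s i : nat) < (nth x0 s j : nat))%N.
Proof.
move=> So hij hj.
apply: (sorted_ltn_nth (fun x y z => @ltn_trans _ _ _) x0 So) => //.
by rewrite inE (ltn_trans hij).
Qed.

Lemma nth_le (s : seq pt) x0 i j : sorted (fun u v : pt => (u : nat) < (v : nat))%N s ->
  (i <= j)%N -> (j < size s)%N ->
  ((nth x0 s i : nat) <= (nth x0 s j : nat))%N.
Proof.
move=> So; rewrite leq_eqVlt => /orP[/eqP -> //|hij] hj.
by apply: ltnW; apply: nth_lt So _ _.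
Qed.

Definition oneside (Y : {set pt}) (a b : pt) :=
  [forall y in Y, ~~ inside a b y] || [forall y in Y, ~~ outside a b y].

Lemma oneside_sym Y a b : oneside Y a b = oneside Y b a.
Proof.
have E1 : inside a b =1 inside b a by move=> y; rewrite /inside minnC maxnC.
have E2 : outside a b =1 outside b a by move=> y; rewrite /outside minnC maxnC.
rewrite /oneside; congr (_ || _); apply: eq_forallb => y; by rewrite ?E1 ?E2.
Qed.

Lemma oneside_next (Y : {set pt}) a : a \in Y -> oneside Y a (next (enum Y) a).
Proof.
move=> aY; have So := sorted_enum Y; have mY : forall y, (y \in enum Y) = (y \in Y) := mem_enum _.
have Us := enum_uniq (mem Y); move: (enum Y) So mY Us => s So mY Us.
have as_ : a \in s by rewrite mY.
have hi : (index a s < size s)%N by rewrite index_mem.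
have Ea : nth a s (index a s) = a by apply: nth_index.
rewrite -{2}Ea next_nth_modp //.
have hpos : (0 < size s)%N by case: (size s) hi.
case: (ltngtP (index a s).+1 (size s)) => hs; last first.
- rewrite hs modnn.
  apply/orP; right; apply/forall_inP => y yY.
  have ys : y \in s by rewrite mY.
  have hy : (index y s < size s)%N by rewrite index_mem.
  have Ey : nth a s (index y s) = y by apply: nth_index.
  have h1 := @nth_le s a 0 (index y s) So (leq0n _) hy.
  have h2 : ((nth a s (index y s) : nat) <= (nth a s (index a s) : nat))%N.
    by apply: nth_le So _ _ => //; rewrite -ltnS hs.
  rewrite Ey Ea in h1 h2.
  rewrite /outside; lia.
- by exfalso; lia.
- rewrite modn_small //.
  apply/orP; left; apply/forall_inP => y yY.
  have ys : y \in s by rewrite mY.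
  have hy : (index y s < size s)%N by rewrite index_mem.
  have Ey : nth a s (index y s) = y by apply: nth_index.
  have h0 := @nth_lt s a _ _ So (ltnSn (index a s)) hs.
  rewrite Ea in h0.
  case: (leqP (index y s) (index a s)) => hya.
  + have h1 := @nth_le s a _ _ So hya hi.
    rewrite Ey Ea in h1; rewrite /inside; lia.
  + have h1 := @nth_le s a _ _ So hya hy.
    rewrite Ey in h1; rewrite /inside; lia.
Qed.

Lemma next_of_oneside (Y : {set pt}) a b : a \in Y -> b \in Y -> a != b ->
  oneside Y a b -> next (enum Y) a = b \/ next (enum Y) b = a.
Proof.
wlog hab : a b / ((a : nat) < (b : nat))%N.
  move=> W aY bY nab os.
  case: (ltngtP (a : nat) (b : nat)) => h.
  - exact: W.
  - by rewrite oneside_sym in os; case: (W b a h bY aY _ os); auto; rewrite eq_sym.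
  - by move/eqP: nab; case; apply: val_inj.
move=> aY bY nab os; have So := sorted_enum Y; have mY : forall y, (y \in enum Y) = (y \in Y) := mem_enum _.
have Us := enum_uniq (mem Y); move: (enum Y) So mY Us => s So mY Us.
have as_ : a \in s by rewrite mY.
have bs_ : b \in s by rewrite mY.
have hi : (index a s < size s)%N by rewrite index_mem.
have hj : (index b s < size s)%N by rewrite index_mem.
have Ea : nth a s (index a s) = a by apply: nth_index.
have Eb : nth a s (index b s) = b by apply: nth_index.
have hij : (index a s < index b s)%N.
  rewrite ltnNge; apply/negP => hle.
  have := @nth_le s a _ _ So hle hi; rewrite Ea Eb; lia.
case/orP: os => /forall_inP H.
- left; rewrite -{1}Ea next_nth_modp //.
  have hs : ((index a s).+1 < size s)%N by apply: leq_ltn_trans hj.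
  rewrite modn_small //.
  case: (ltngtP (index a s).+1 (index b s)) => h.
  + have y1 := @nth_lt s a _ _ So (ltnSn (index a s)) hs.
    have y2 := @nth_lt s a _ _ So h hj.
    rewrite Ea Eb in y1 y2.
    have yY : nth a s (index a s).+1 \in Y by rewrite -mY mem_nth.
    by case/negP: (H _ yY); move: y1 y2; rewrite /inside; move: (nth _ _ _) => z; lia.
  + by move: h; rewrite ltnS leqNgt hij.
  + by rewrite h.
- right; rewrite -{1}Eb next_nth_modp //.
  have hpos : (0 < size s)%N by case: (size s) hi.
  have ha0 : index a s = 0.
    case: (posnP (index a s)) => // hp.
    have y1 := @nth_lt s a _ _ So hp hi; rewrite Ea in y1.
    have yY : nth a s 0 \in Y by rewrite -mY mem_nth.
    by case/negP: (H _ yY); move: y1; rewrite /outside; move: (nth _ _ _) => z; lia.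
  have hb : (index b s).+1 = size s.
    case: (ltngtP (index b s).+1 (size s)) => // h.
    + have y1 := @nth_lt s a _ _ So (ltnSn (index b s)) h; rewrite Eb in y1.
      have yY : nth a s (index b s).+1 \in Y by rewrite -mY mem_nth.
      by case/negP: (H _ yY); move: y1; rewrite /outside; move: (nth _ _ _) => z; lia.
    + by exfalso; lia.
  by rewrite hb modnn -ha0.
Qed.

End Sorted.

Definition mate n (M : {set {set 'I_n}}) (x : 'I_n) : 'I_n :=
  odflt x [pick y | [set x; y] \in M].

Section Match.
Variable n : nat.
Local Notation pt := 'I_n.
Variable M : {set {set pt}}.
Hypothesis hM : matching M.

Lemma match_card2 e : e \in M -> #|e| = 2.
Proof. by case/and3P: hM => /forall_inP H _ _ /H /eqP. Qed.

Lemma match_nc e f : e \in M -> f \in M -> ~~ crosses e f.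
Proof. by case/and3P: hM => _ _ /forall_inP H /H /forall_inP; apply. Qed.

Lemma match_one x : exists e0, [set e in M | x \in e] = [set e0].
Proof. by case/and3P: hM => _ /forallP /(_ x) /cards1P. Qed.

Lemma match_cover x : exists2 e, e \in M & x \in e.
Proof.
case: (match_one x) => e0 E.
have : e0 \in [set e in M | x \in e] by rewrite E set11.
by rewrite inE => /andP[]; exists e0.
Qed.

Lemma match_uniq e f x : e \in M -> f \in M -> x \in e -> x \in f -> e = f.
Proof.
move=> eM fM xe xf; case: (match_one x) => e0 E.
have : e \in [set e in M | x \in e] by rewrite inE eM xe.
have : f \in [set e in M | x \in e] by rewrite inE fM xf.
by rewrite E !inE => /eqP -> /eqP ->.
Qed.

Lemma mateP x : [set x; mate M x] \in M.
Proof.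
have [y hy] : exists y, [set x; y] \in M.
  case: (match_cover x) => e eM xe.
  have /cards2P [u [v [uv Ee]]] : #|e| == 2 by rewrite (match_card2 eM).
  move: xe eM; rewrite Ee => /set2P [->|->] eM; first by exists v.
  by exists u; rewrite setUC.
rewrite /mate; case: pickP => [z /= -> //|/(_ y)]; by rewrite hy.
Qed.

Lemma mate_neq x : mate M x != x.
Proof.
apply/negP => /eqP E; have := match_card2 (mateP x).
by rewrite E setUid cards1.
Qed.

Lemma edge_mate e x : e \in M -> x \in e -> e = [set x; mate M x].
Proof. by move=> eM xe; apply: match_uniq eM (mateP x) xe (set21 _ _). Qed.

Lemma mateK : involutive (mate M).
Proof.
move=> x.
have E := edge_mate (mateP x) (set22 x (mate M x)).
have : mate M (mate M x) \in [set x; mate M x].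
  by rewrite E set22.
case/set2P => // h; move: (mate_neq (mate M x)); by rewrite h eqxx.
Qed.

Lemma mate_in e x : e \in M -> x \in e -> mate M x \in e.
Proof. by move=> eM xe; rewrite (edge_mate eM xe) set22. Qed.

End Match.

Lemma even_closed (T : finType) (h : T -> T) (S : {set T}) :
  involutive h -> (forall x, h x != x) -> (forall x, x \in S -> h x \in S) ->
  ~~ odd #|S|.
Proof.
move=> hK hN.
move: {2}#|S| (leqnn #|S|) => c; elim: c S => [|c IH] S hc hS.
  by move: hc; rewrite leqn0 => /eqP ->.
case: (set_0Vmem S) => [E|[x xS]]; first by rewrite E cards0.
set S' := S :\ x :\ h x.
have hxx : h x \in S :\ x by rewrite !inE hN hS.
have E1 : #|S| = #|S'|.+2.
  by rewrite (cardsD1 x S) xS (cardsD1 (h x) (S :\ x)) hxx.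
have cS' : ~~ odd #|S'|.
  apply: IH; first by move: hc; rewrite E1; lia.
  move=> y; rewrite !inE => /and3P[yhx yx yS].
  rewrite hS // andbT; apply/andP; split.
  - apply/negP => /eqP E; move/negP: yx; apply; apply/eqP.
    by rewrite -(hK y) E hK.
  - apply/negP => /eqP E; move/negP: yhx; apply; apply/eqP; by rewrite -E hK.
by rewrite E1 /= negbK.
Qed.

Definition adjr n (f g : 'I_n -> 'I_n) : rel 'I_n :=
  fun x y => (y == f x) || (y == g x).
Definition comp n (f g : 'I_n -> 'I_n) (x : 'I_n) : {set 'I_n} :=
  [set y | connect (adjr f g) x y].

Lemma comp_swap n (f g : 'I_n -> 'I_n) x : comp f g x = comp g f x.
Proof.
apply/setP => y; rewrite !inE; apply: eq_connect => u v.
by rewrite /adjr orbC.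
Qed.

Section FG.
Variable n : nat.
Local Notation pt := 'I_n.
Variables f g : pt -> pt.
Hypotheses (fK : involutive f) (gK : involutive g).
Hypotheses (fN : forall x, f x != x) (gN : forall x, g x != x).
Hypothesis fg : forall x, f x != g x.
Hypothesis ncff : forall x y, ~~ crosses [set x; f x] [set y; f y].
Hypothesis ncgg : forall x y, ~~ crosses [set x; g x] [set y; g y].
Hypothesis ncfg : forall x y, ~~ crosses [set x; f x] [set y; g y].

Local Notation adj := (adjr f g).
Local Notation comp := (comp f g).

Lemma adj_sym : symmetric adj.
Proof.
move=> x y; rewrite /adjr.
have Ef : (y == f x) = (x == f y) by apply/eqP/eqP => ->; rewrite ?fK.
have Eg : (y == g x) = (x == g y) by apply/eqP/eqP => ->; rewrite ?gK.
by rewrite Ef Eg.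
Qed.

Lemma comp_x x : x \in comp x.
Proof. by rewrite inE connect0. Qed.

Lemma comp_f x y : y \in comp x -> f y \in comp x.
Proof.
rewrite !inE => h; apply: connect_trans h _; apply: connect1.
by rewrite /adjr eqxx.
Qed.

Lemma comp_g x y : y \in comp x -> g y \in comp x.
Proof.
rewrite !inE => h; apply: connect_trans h _; apply: connect1.
by rewrite /adjr eqxx orbT.
Qed.

Lemma comp_eq x y : y \in comp x -> comp y = comp x.
Proof.
rewrite inE => h; apply/setP => z; rewrite !inE.
have cs := sym_connect_sym adj_sym.
apply/idP/idP => h2; first exact: connect_trans h h2.
by apply: connect_trans h2; rewrite cs.
Qed.

Lemma comp_sym x y : y \in comp x -> x \in comp y.
Proof. by move=> h; rewrite (comp_eq h) comp_x. Qed.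

Lemma comp_sub (S : {set pt}) x : x \in S ->
  (forall y, y \in S -> y \in comp x -> f y \in S /\ g y \in S) ->
  comp x \subset S.
Proof.
move=> xS H; apply/subsetP => y; rewrite inE => /connectP [p pa ->].
suff: forall z, z \in S -> z \in comp x -> path adj z p -> last z p \in S.
  by apply => //; apply: comp_x.
elim: p {pa} => [|v p IH] z zS zc //= /andP[hv hp].
have vc : v \in comp x.
  by case/orP: hv => /eqP ->; [apply: comp_f | apply: comp_g].
have vS : v \in S by case/orP: hv => /eqP ->; case: (H z zS zc).
exact: IH.
Qed.

Lemma side_closed (a b : pt) (P Q : pred pt) (h : pt -> pt) :
  (forall y z, P y -> Q z -> crosses [set a; b] [set y; z]) ->
  (forall y, y != a -> y != b -> P y || Q y) ->
  (forall y, ~~ crosses [set a; b] [set y; h y]) ->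
  forall y, P y -> h y != a -> h y != b -> P (h y).
Proof.
move=> hPQ hc hn y Py ha hb.
case/orP: (hc _ ha hb) => // Qy.
by move: (hn y); rewrite (hPQ _ _ Py Qy).
Qed.

Lemma adj_oneside x : oneside (comp x) x (f x).
Proof.
set a := x; set b := f x.
have fa : f a = b by [].
have fb : f b = a by rewrite /b fK.
have hIO : forall y z, inside a b y -> outside a b z -> crosses [set a; b] [set y; z].
  by move=> y z; apply: cross_io.
have hOI : forall y z, outside a b y -> inside a b z -> crosses [set a; b] [set y; z].
  by move=> y z h1 h2; rewrite [[set y; z]]setUC; apply: cross_io.
have cov : forall y, y != a -> y != b -> inside a b y || outside a b y.
  by move=> y; apply: io_cover.
have cov' : forall y, y != a -> y != b -> outside a b y || inside a b y.
  by move=> y h1 h2; rewrite orbC cov.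
have finj : forall u v, f u = f v -> u = v.
  by move=> u v E; rewrite -(fK u) E fK.
have ginj : forall u v, g u = g v -> u = v.
  by move=> u v E; rewrite -(gK u) E gK.
have fa' : forall y, y != a -> y != b -> f y != a /\ f y != b.
  move=> y ya yb; split; apply/negP => /eqP E.
  - by move/negP: yb; apply; apply/eqP; rewrite -(fK y) E.
  - by move/negP: ya; apply; apply/eqP; apply: finj; rewrite E fa.
have ncf : forall y, ~~ crosses [set a; b] [set y; f y] by move=> y; apply: ncff.
have ncg : forall y, ~~ crosses [set a; b] [set y; g y] by move=> y; apply: ncfg.
have Ia : inside a b a = false by apply: inside_l.
have Ib : inside a b b = false by apply: inside_r.
have Oa : outside a b a = false by apply: outside_l.
have Ob : outside a b b = false by apply: outside_r.
have neqI : forall y, inside a b y -> y != a /\ y != b.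
  by move=> y h; split; apply/negP => /eqP E; move: h; rewrite E ?Ia ?Ib.
have neqO : forall y, outside a b y -> y != a /\ y != b.
  by move=> y h; split; apply/negP => /eqP E; move: h; rewrite E ?Oa ?Ob.
have fI : forall y, inside a b y -> inside a b (f y).
  move=> y Iy; case: (neqI _ Iy) => ya yb; case: (fa' _ ya yb) => h1 h2.
  exact: (side_closed hIO cov ncf Iy h1 h2).
have fO : forall y, outside a b y -> outside a b (f y).
  move=> y Oy; case: (neqO _ Oy) => ya yb; case: (fa' _ ya yb) => h1 h2.
  exact: (side_closed hOI cov' ncf Oy h1 h2).
set I := [set y | inside a b y].
have evI : ~~ odd #|I|.
  apply: (even_closed fK fN) => y; rewrite !inE; exact: fI.
have gI : forall y, inside a b y -> g y != a -> g y != b -> inside a b (g y).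
  move=> y Iy h1 h2; exact: (side_closed hIO cov ncg Iy h1 h2).
have gO : forall y, outside a b y -> g y != a -> g y != b -> outside a b (g y).
  move=> y Oy h1 h2; exact: (side_closed hOI cov' ncg Oy h1 h2).
have gaa : g a != a by apply: gN.
have gab : g a != b by rewrite eq_sym -fa; apply: fg.
have gbb : g b != b by apply: gN.
have gba : g b != a by rewrite eq_sym -fb; apply: fg.
have gya : forall y, g y = a -> y = g a by move=> y <-; rewrite gK.
have gyb : forall y, g y = b -> y = g b by move=> y <-; rewrite gK.
have Hin : (forall y, inside a b y -> inside a b (g y)) ->
    [forall y in comp x, ~~ inside a b y].
  move=> gcl; apply/forall_inP => y yc; apply/negP => Iy.
  have : comp y \subset I.
    apply: comp_sub; first by rewrite inE.
    by move=> z; rewrite !inE => Iz _; split; [apply: fI | apply: gcl].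
  move/subsetP => /(_ x (comp_sym yc)); by rewrite inE Ia.
have Hout : (forall y, outside a b y -> outside a b (g y)) ->
    [forall y in comp x, ~~ outside a b y].
  move=> gcl; apply/forall_inP => y yc; apply/negP => Oy.
  have : comp y \subset [set z | outside a b z].
    apply: comp_sub; first by rewrite inE.
    by move=> z; rewrite !inE => Oz _; split; [apply: fO | apply: gcl].
  move/subsetP => /(_ x (comp_sym yc)); by rewrite inE Oa.
rewrite /oneside.
case Iga: (inside a b (g a)); case Igb: (inside a b (g b)).
-
  apply/orP; right; apply: Hout => y Oy.
  case: (neqO _ Oy) => ya yb.
  have h1 : g y != a.
    by apply/negP => /eqP /gya E; rewrite E in Oy; apply: (io_excl Iga Oy).
  have h2 : g y != b.
    by apply/negP => /eqP /gyb E; rewrite E in Oy; apply: (io_excl Igb Oy).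
  exact: gO.
-
  exfalso.
  have : ~~ odd #|a |: I|.
    apply: (even_closed gK gN) => y; rewrite !inE => /orP[/eqP ->|Iy].
    + by rewrite Iga orbT.
    + case: (g y =P a) => [->|/eqP h1]; first by [].
      case: (g y =P b) => [/gyb E|/eqP h2]; first by move: Iy; rewrite E Igb.
      by rewrite gI ?orbT.
  by rewrite cardsU1 inE Ia /= evI.
- exfalso.
  have : ~~ odd #|b |: I|.
    apply: (even_closed gK gN) => y; rewrite !inE => /orP[/eqP ->|Iy].
    + by rewrite Igb orbT.
    + case: (g y =P b) => [->|/eqP h1]; first by [].
      case: (g y =P a) => [/gya E|/eqP h2]; first by move: Iy; rewrite E Iga.
      by rewrite gI ?orbT.
  by rewrite cardsU1 inE Ib /= evI.
- apply/orP; left; apply: Hin => y Iy.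
  case: (neqI _ Iy) => ya yb.
  have h1 : g y != a.
    by apply/negP => /eqP /gya E; move: Iy; rewrite E Iga.
  have h2 : g y != b.
    by apply/negP => /eqP /gyb E; move: Iy; rewrite E Igb.
  exact: gI.
Qed.

Lemma comp_next_f x y : y \in comp x ->
  next (enum (comp x)) y = f y \/ next (enum (comp x)) (f y) = y.
Proof.
move=> yc.
have fyc : f y \in comp x by apply: comp_f.
have := adj_oneside y; rewrite (comp_eq yc) => os.
case: (next_of_oneside yc fyc _ os); auto.
by rewrite eq_sym fN.
Qed.

Lemma sepA x (e : {set pt}) a b : (forall z, z \in e -> z \notin comp x) ->
  a \in comp x -> b \in comp x -> crosses e [set a; b] ->
  exists2 y, y \in comp x & crosses e [set y; f y] || crosses e [set y; g y].
Proof.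
move=> eY aY bY /crossesE [c [d [a' [b' [Ee Eab Ia Ob]]]]].
have a'Y : a' \in comp x.
  have : a' \in [set a; b] by rewrite Eab set21.
  by case/set2P => ->.
have b'Y : b' \in comp x.
  have : b' \in [set a; b] by rewrite Eab set22.
  by case/set2P => ->.
have cY : c \notin comp x by apply: eY; rewrite Ee set21.
have dY : d \notin comp x by apply: eY; rewrite Ee set22.
case: (boolP [exists y in comp x, crosses e [set y; f y] || crosses e [set y; g y]])
  => [/exists_inP [y yc hy]|H]; first by exists y.
exfalso.
have step : forall z (h : pt -> pt), inside c d z -> h z \in comp x ->
    ~~ crosses e [set z; h z] -> inside c d (h z).
  move=> z h Iz hc nc.
  have hzc : h z != c by apply/negP => /eqP E; move: cY; rewrite -E hc.
  have hzd : h z != d by apply/negP => /eqP E; move: dY; rewrite -E hc.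
  case/orP: (io_cover hzc hzd) => // Oz.
  by move: nc; rewrite Ee (cross_io Iz Oz).
have sub : comp a' \subset [set z | inside c d z].
  apply: comp_sub; first by rewrite inE.
  move=> z; rewrite inE => Iz zc.
  have zY : z \in comp x by rewrite -(comp_eq a'Y).
  move/exists_inP: H => H.
  have nf : ~~ crosses e [set z; f z].
    by apply/negP => hc; apply: H; exists z => //; rewrite hc.
  have ng : ~~ crosses e [set z; g z].
    by apply/negP => hc; apply: H; exists z => //; rewrite hc orbT.
  by rewrite !inE; split; apply: step => //; [apply: comp_f | apply: comp_g].
have : b' \in comp a' by rewrite (comp_eq a'Y).
move/(subsetP sub); rewrite inE => Ib.
exact: io_excl Ib Ob.
Qed.

End FG.


Section Qs.
Variable n : nat.
Local Notation pt := 'I_n.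

Lemma Qseq_uniq (Y : {set pt}) q : uniq (Qseq Y q).
Proof. by rewrite /Qseq rot_uniq enum_uniq. Qed.
Lemma Qseq_size (Y : {set pt}) q : size (Qseq Y q) = #|Y|.
Proof. by rewrite /Qseq size_rot cardE. Qed.
Lemma Qseq_mem (Y : {set pt}) q y : (y \in Qseq Y q) = (y \in Y).
Proof. by rewrite /Qseq mem_rot mem_enum. Qed.
Lemma Qseq_next (Y : {set pt}) q : next (Qseq Y q) =1 next (enum Y).
Proof. by apply: next_rot; apply: enum_uniq. Qed.
Lemma Qseq_nth0 (Y : {set pt}) q : q \in Y -> nth q (Qseq Y q) 0 = q.
Proof.
move=> qY; have qs : q \in enum Y by rewrite mem_enum.
have hi : (index q (enum Y) < size (enum Y))%N by rewrite index_mem.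
rewrite /Qseq /rot nth_cat size_drop subn_gt0 hi nth_drop addn0.
exact: nth_index.
Qed.

Lemma nth_Y (Y : {set pt}) q j : (j < #|Y|)%N -> nth q (Qseq Y q) j \in Y.
Proof. by move=> hj; rewrite -(Qseq_mem Y q) mem_nth // Qseq_size. Qed.

Lemma adj_nc (Y : {set pt}) u c d : u \in Y -> c \in Y -> d \in Y ->
  ~~ crosses [set u; next (enum Y) u] [set c; d].
Proof.
move=> uY cY dY; apply/negP => /crossesE [a [b [c' [d' [E1 E2 I O]]]]].
have c'Y : c' \in Y.
  have : c' \in [set c; d] by rewrite E2 set21.
  by case/set2P => ->.
have d'Y : d' \in Y.
  have : d' \in [set c; d] by rewrite E2 set22.
  by case/set2P => ->.
have := oneside_next uY; rewrite /oneside => /orP[] /forall_inP H.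
- by move: (H _ c'Y); rewrite (inside_set2 E1) I.
- by move: (H _ d'Y); rewrite (outside_set2 E1) O.
Qed.

Section Pairs.
Variables (N : {set {set pt}}) (q : pt).
Local Notation t := (Qseq (cover N) q).
Hypothesis hsz : #|cover N| = #|N| * 2.

Lemma size_t : size t = #|N| * 2.
Proof. by rewrite Qseq_size hsz. Qed.

Lemma pairs_nth i : (i < #|N|)%N ->
  (i.*2.+1 < size t)%N /\ nth q t i.*2.+1 = next t (nth q t i.*2).
Proof.
move=> hi; have h1 : (i.*2.+1 < size t)%N by rewrite size_t; lia.
split => //; rewrite next_nth_mod ?Qseq_uniq //; last by apply: ltnW.
by rewrite modn_small.
Qed.

Lemma pairs0_edges e : e \in pairs0 N q -> exists2 i, (i < #|N|)%N &
  e = [set nth q t i.*2; next t (nth q t i.*2)].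
Proof.
rewrite /pairs0 => /imsetP [i _ ->]; exists i => //.
by case: (pairs_nth (ltn_ord i)) => _ ->.
Qed.

Lemma pairs1_edges e : e \in pairs1 N q -> exists2 i, (i < #|N|)%N &
  e = [set nth q t i.*2.+1; next t (nth q t i.*2.+1)].
Proof.
rewrite /pairs1 => /imsetP [i _ ->]; exists i => //.
case: (pairs_nth (ltn_ord i)) => h1 _.
by rewrite next_nth_mod ?Qseq_uniq.
Qed.

End Pairs.
End Qs.

Lemma flipE n (M N : {set {set 'I_n}}) : flippable M N ->
  exists q, [/\ q \in cover N, N = pairs0 N q & flip N = pairs1 N q].
Proof.
case/and4P => _ _ /exists_inP [q0 q0Y /eqP E0] _.
rewrite /flip; case: pickP => [q /andP[qY /eqP E]|H]; first by exists q.
by move: (H q0); rewrite q0Y -E0 eqxx.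
Qed.

Section Block.
Variable n : nat.
Local Notation pt := 'I_n.
Variable M : {set {set pt}}.
Hypothesis hM : matching M.

Lemma card_cover (N : {set {set pt}}) : N \subset M -> #|cover N| = #|N| * 2.
Proof.
move=> NM.
have tN : trivIset N.
  apply/trivIsetP => A B AN BN AB; rewrite -setI_eq0; apply/eqP/setP => z.
  rewrite !inE; apply/negP => /andP[zA zB].
  by move/negP: AB; apply; apply/eqP; apply: (match_uniq hM (subsetP NM _ AN) (subsetP NM _ BN) zA zB).
rewrite -(eqP tN) -sum_nat_const; apply: eq_bigr => e eN.
by apply: (match_card2 hM); apply: (subsetP NM).
Qed.

Lemma partition_block (P : {set {set {set pt}}}) N N' z : partition P M ->
  N \in P -> N' \in P -> z \in cover N -> z \in cover N' -> N = N'.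
Proof.
case/and3P => /eqP covP tP _ NP N'P /bigcupP [e eN ze] /bigcupP [e' e'N ze'].
have eM : e \in M by rewrite -covP; apply/bigcupP; exists N.
have e'M : e' \in M by rewrite -covP; apply/bigcupP; exists N'.
have Ee := match_uniq hM eM e'M ze ze'; subst e'.
case: (N =P N') => // /eqP NN'.
move/trivIsetP: tP => /(_ _ _ NP N'P NN').
rewrite -setI_eq0 => /eqP/setP/(_ e); by rewrite !inE eN e'N.
Qed.

Lemma block_eq (P : {set {set {set pt}}}) N : partition P M -> N \in P ->
  N = [set e in M | e \subset cover N].
Proof.
move=> hP NP; have hP' := hP; case/and3P: hP' => /eqP covP _ _.
apply/setP => e; rewrite inE; apply/idP/idP.
- move=> eN; rewrite -covP; apply/andP; split; first by apply/bigcupP; exists N.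
  by apply: bigcup_sup.
- case/andP => eM eY.
  have /cards2P [z [z' [_ Ez]]] : #|e| == 2 by rewrite (match_card2 hM eM).
  have ze : z \in e by rewrite Ez set21.
  move: eM; rewrite -covP => /bigcupP [N2 N2P eN2].
  have zN2 : z \in cover N2 by apply/bigcupP; exists e.
  by rewrite (partition_block hP NP N2P (subsetP eY _ ze) zN2).
Qed.

End Block.

Lemma dbl1_lt i k : (i < k)%N -> (i.*2.+1 < k * 2)%N. Proof. lia. Qed.
Lemma dbl_lt i k : (i < k)%N -> (i.*2 < k * 2)%N. Proof. lia. Qed.
Lemma odd_neq i j : (i.*2.+1 == j.*2) = false. Proof. apply/eqP; lia. Qed.
Lemma mod_neq j s : (j.*2.+1 < s)%N -> (4 <= s)%N -> (j.*2.+2 %% s == j.*2) = false.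
Proof.
move=> h1 h2; case: (ltngtP j.*2.+2 s) => h3.
- by rewrite modn_small //; apply/eqP; lia.
- lia.
- rewrite h3 modnn; apply/eqP; lia.
Qed.
Lemma two_lt k : (1 < k)%N -> (4 <= k * 2)%N. Proof. lia. Qed.

Section Conv.
Variable n : nat.
Local Notation pt := 'I_n.
Variables M M' : {set {set pt}}.
Hypotheses (hM : matching M) (hM' : matching M').
Variable P : {set {set {set pt}}}.
Hypothesis hFP : flip_partition M M' P.

Lemma blockF N : N \in P -> exists q, [/\ q \in cover N, N = pairs0 N q,
  flip N = pairs1 N q, N \subset M & #|cover N| = #|N| * 2 /\ (1 < #|N|)%N].
Proof.
case: hFP => _ hfl _ _ NP.
have hf := hfl N NP; case/and4P: (hf) => NM h1 _ _.
case: (flipE hf) => q [qY E0 E1]; exists q; split => //.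
by split => //; apply: (card_cover hM).
Qed.

Lemma edge_e_nonempty e : e \in M -> exists z, z \in e.
Proof.
move=> eM; have /cards2P [z [z' [_ Ez]]] : #|e| == 2 by rewrite (match_card2 hM eM).
by exists z; rewrite Ez set21.
Qed.

Lemma M'_flip f : f \in M' -> exists2 N, N \in P & f \in flip N.
Proof. by case: hFP => _ _ _ ->; case/bigcupP => N NP fN; exists N. Qed.

Lemma flip_edge N f : N \in P -> f \in flip N -> exists q, exists2 v,
  (v \in cover N) && (next (Qseq (cover N) q) v \in cover N) &
  [/\ f = [set v; next (Qseq (cover N) q) v], next (Qseq (cover N) q) =1 next (enum (cover N)),
     q \in cover N, N = pairs0 N q & exists2 i, (i < #|N|)%N & v = nth q (Qseq (cover N) q) i.*2.+1].
Proof.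
move=> NP; case: (blockF NP) => q [qY E0 E1 NM [hsz h2]]; rewrite E1 => fN.
case: (pairs1_edges hsz fN) => i hi Ef.
have hv : (i.*2.+1 < #|cover N|)%N by rewrite hsz dbl1_lt.
exists q; exists (nth q (Qseq (cover N) q) i.*2.+1).
  by rewrite -!(Qseq_mem (cover N) q) mem_next mem_nth // Qseq_size.
split => //; first exact: Qseq_next.
by exists i.
Qed.

Lemma conv_dc : disjoint_compatible M M'.
Proof.
have hP := hFP; case: hP => hP hfl _ _.
have hP' := hP; case/and3P: hP' => /eqP covP tP _.
apply/andP; split.
- rewrite -setI_eq0; apply/eqP/setP => f; rewrite !inE; apply/negP => /andP[fM fM'].
  case: (M'_flip fM') => N NP fN.
  case: (blockF NP) => q [qY E0 E1 NM [hsz h2]].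
  move: fN; rewrite E1 => fN.
  case: (pairs1_edges hsz fN) => i hi Ef.
  set t := Qseq (cover N) q in Ef.
  have st : size t = #|N| * 2 by rewrite Qseq_size.
  have hv : (i.*2.+1 < size t)%N by rewrite st dbl1_lt.
  have vY : nth q t i.*2.+1 \in cover N by rewrite -(Qseq_mem _ q) mem_nth.
  case/bigcupP: (vY) => e eN ve.
  have Efe : f = e.
    apply: (match_uniq hM fM (subsetP NM _ eN) _ ve); by rewrite Ef set21.
  move: eN; rewrite -Efe E0 => /(pairs0_edges hsz) [j hj].
  rewrite Ef -/t => /set2_eqE [[h1 _]|[h1 h2']].
  + have hu : (j.*2 < size t)%N by rewrite st dbl_lt.
    by move/eqP: h1; rewrite nth_uniq ?Qseq_uniq // odd_neq.
  + case: (pairs_nth q hsz hj) => hj1 Ej; rewrite -/t in hj1 Ej.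
    rewrite h1 -Ej next_nth_mod ?Qseq_uniq // in h2'.
    have hu : (j.*2 < size t)%N by rewrite st dbl_lt.
    have s4 : (4 <= size t)%N by rewrite st two_lt.
    have hm : ((j.*2.+2) %% size t < size t)%N by rewrite ltn_mod; case: (size t) s4.
    by move/eqP: h2'; rewrite nth_uniq ?Qseq_uniq // mod_neq.
- apply/forall_inP => e eM; apply/forall_inP => f fM'.
  case: (M'_flip fM') => N NP fN.
  case: (flip_edge NP fN) => q [v /andP[vY nvY] [Ef Enext qY E0 _]].
  have eP : e \in cover P by rewrite covP.
  case/bigcupP: eP => N2 N2P eN2.
  case: (N2 =P N) => [EN|/eqP NN].
  + subst N2; case: (blockF NP) => _ [_ _ _ NM [hsz _]].
    move: eN2; rewrite {1}E0 => /(pairs0_edges hsz) [j hj Ee].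
    have hu : (j.*2 < #|cover N|)%N by rewrite hsz dbl_lt.
    rewrite Ee Ef !Enext; apply: adj_nc; [exact: nth_Y | exact: vY | by rewrite -Enext].
  + have eN : e \notin N.
      apply/negP => eN; case: (edge_e_nonempty eM) => z ze.
      have z1 : z \in cover N by apply/bigcupP; exists e.
      have z2 : z \in cover N2 by apply/bigcupP; exists e.
      by move/negP: NN; apply; apply/eqP; apply: (partition_block hM hP N2P NP z2 z1).
    case/and4P: (hfl N NP) => _ _ _ /forall_inP /(_ e).
    rewrite inE eN eM => /(_ erefl) H.
    apply/negP => hc; move/negP: H; apply.
    apply/exists_inP; exists v => //; apply/exists_inP; exists (next (Qseq (cover N) q) v) => //.
    by rewrite -Ef.
Qed.

End Conv.

Lemma idx_split j k : (j < k * 2)%N ->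
  (exists2 i, (i < k)%N & j = i.*2) \/ (exists2 i, (i < k)%N & j = i.*2.+1).
Proof.
move=> h; have := odd_double_half j; case: (odd j) => /= E.
- by right; exists j./2 => //; lia.
- by left; exists j./2 => //; lia.
Qed.

Lemma two_blk a b : (0 < b)%N -> a = b * 2 -> a != 2 -> (1 < b)%N.
Proof. move=> h1 h2 /eqP h3; lia. Qed.

Section Fwd.
Variable n : nat.
Local Notation pt := 'I_n.
Variables M M' : {set {set pt}}.
Hypotheses (hM : matching M) (hM' : matching M') (hdc : disjoint_compatible M M').
Local Notation m := (mate M).
Local Notation m' := (mate M').

Let mK := mateK hM.
Let m'K := mateK hM'.
Let mN := mate_neq hM.
Let m'N := mate_neq hM'.

Lemma fg x : m x != m' x.
Proof.
apply/negP => /eqP E; case/andP: hdc => D _.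
move: D; rewrite -setI_eq0 => /eqP/setP/(_ [set x; m x]).
by rewrite !inE (mateP hM) /= E (mateP hM').
Qed.

Lemma gf x : m' x != m x.
Proof. by rewrite eq_sym fg. Qed.

Lemma ncMM' e f : e \in M -> f \in M' -> ~~ crosses e f.
Proof.
move=> eM fM'; case/andP: hdc => _ /forall_inP /(_ _ eM) /forall_inP; exact.
Qed.

Lemma nc_all e f : (e \in M) || (e \in M') -> (f \in M) || (f \in M') -> ~~ crosses e f.
Proof.
case/orP => he; case/orP => hf.
- by apply: (match_nc hM).
- by apply: ncMM'.
- by rewrite crossesC; apply: ncMM'.
- by apply: (match_nc hM').
Qed.

Let ncff x y : ~~ crosses [set x; m x] [set y; m y].
Proof. by apply: nc_all; rewrite mateP. Qed.
Let ncgg x y : ~~ crosses [set x; m' x] [set y; m' y].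
Proof. by apply: nc_all; rewrite mateP ?orbT. Qed.
Let ncfg x y : ~~ crosses [set x; m x] [set y; m' y].
Proof. by apply: nc_all; rewrite mateP ?orbT. Qed.
Let ncgf x y : ~~ crosses [set x; m' x] [set y; m y].
Proof. by apply: nc_all; rewrite mateP ?orbT. Qed.

Local Notation Y x := (comp m m' x).

Definition blk x := [set e in M | e \subset Y x].

Lemma NXf x y : y \in Y x ->
  next (enum (Y x)) y = m y \/ next (enum (Y x)) (m y) = y.
Proof. exact: (comp_next_f mK m'K mN m'N fg ncff ncfg). Qed.

Lemma NXg x y : y \in Y x ->
  next (enum (Y x)) y = m' y \/ next (enum (Y x)) (m' y) = y.
Proof. rewrite comp_swap; exact: (comp_next_f m'K mK m'N mN gf ncgg ncgf). Qed.

Lemma edge_blk x y : y \in Y x -> [set y; m y] \in blk x.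
Proof.
move=> yY; rewrite inE mateP //; apply/subsetP => z /set2P [->|->] //.
exact: comp_f.
Qed.

Lemma cover_blk x : cover (blk x) = Y x.
Proof.
apply/setP => y; apply/bigcupP/idP.
- by case=> e; rewrite inE => /andP[_ /subsetP H] /H.
- move=> yY; exists [set y; m y]; [exact: edge_blk | exact: set21].
Qed.

Lemma blk_sub x : blk x \subset M.
Proof. by apply/subsetP => e; rewrite inE => /andP[]. Qed.

Lemma card_blk x : #|Y x| = #|blk x| * 2.
Proof. by rewrite -cover_blk; apply: (card_cover hM); apply: blk_sub. Qed.

Section Alt.
Variables (x q : pt).
Hypothesis qY : q \in Y x.
Local Notation t := (Qseq (Y x) q).

Lemma t_uniq : uniq t. Proof. exact: Qseq_uniq. Qed.
Lemma t_size : size t = #|Y x|. Proof. exact: Qseq_size. Qed.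

Lemma nextS j : (j.+1 < #|Y x|)%N -> next t (nth q t j) = nth q t j.+1.
Proof.
move=> h; rewrite next_nth_mod ?t_uniq ?t_size ?modn_small //.
exact: ltnW.
Qed.

Lemma next_inj a b : next t a = next t b -> a = b.
Proof. by move=> E; rewrite -(prev_next t_uniq a) E prev_next // t_uniq. Qed.

Lemma t_index y : y \in Y x -> exists2 j, (j < #|Y x|)%N & y = nth q t j.
Proof.
move=> yY; have yt : y \in t by rewrite Qseq_mem.
exists (index y t); first by rewrite -t_size index_mem.
by rewrite nth_index.
Qed.

Hypothesis hq : m q = next t q.

Lemma alt j : (j < #|Y x|)%N ->
  (if odd j then m' else m) (nth q t j) = next t (nth q t j).
Proof.
elim: j => [|j IH] hj; first by rewrite /= Qseq_nth0.
have hj' : (j < #|Y x|)%N by apply: ltnW.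
have IHj := IH hj'.
have uY : nth q t j \in Y x by apply: nth_Y.
have vY : next t (nth q t j) \in Y x by rewrite -(Qseq_mem _ q) mem_next Qseq_mem.
rewrite -nextS //=.
move: IHj vY; set u := nth q t j; set v := next t u.
case: (odd j) => /= IHj vY.
- case: (NXf vY) => [|E]; first by rewrite -(Qseq_next _ q).
  exfalso; rewrite -(Qseq_next _ q) /v in E.
  have E2 := next_inj E.
  move: (fg u); rewrite IHj -/v -E2 mK eqxx //.
- case: (NXg vY) => [|E]; first by rewrite -(Qseq_next _ q).
  exfalso; rewrite -(Qseq_next _ q) /v in E.
  have E2 := next_inj E.
  move: (fg u); rewrite IHj -/v -E2 m'K eqxx //.
Qed.

Lemma alt0 i : (i < #|blk x|)%N -> m (nth q t i.*2) = nth q t i.*2.+1.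
Proof.
move=> hi; have h1 : (i.*2.+1 < #|Y x|)%N by rewrite card_blk dbl1_lt.
have := alt (ltnW h1); rewrite odd_double /= => ->.
exact: nextS.
Qed.

Lemma alt1 i : (i < #|blk x|)%N -> m' (nth q t i.*2.+1) = next t (nth q t i.*2.+1).
Proof.
move=> hi; have h1 : (i.*2.+1 < #|Y x|)%N by rewrite card_blk dbl1_lt.
by have := alt h1; rewrite /= odd_double /=.
Qed.

Lemma pairs0_blk : blk x = pairs0 (blk x) q.
Proof.
rewrite /pairs0 cover_blk; apply/setP => e; apply/idP/idP.
- move=> eB; have := eB; rewrite inE => /andP[eM eY].
  have /cards2P [y [y' [_ Ey]]] : #|e| == 2 by rewrite (match_card2 hM eM).
  have ye : y \in e by rewrite Ey set21.
  have yY : y \in Y x by apply: (subsetP eY).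
  rewrite (edge_mate hM eM ye).
  case: (t_index yY) => j hj ->.
  rewrite card_blk in hj; case: (idx_split hj) => [[i hi ->]|[i hi ->]].
  + by apply/imsetP; exists (Ordinal hi) => //=; rewrite alt0.
  + apply/imsetP; exists (Ordinal hi) => //=.
    by rewrite -(alt0 hi) mK setUC.
- case/imsetP => i _ ->; rewrite -(alt0 (ltn_ord i)).
  apply: edge_blk; apply: nth_Y; rewrite card_blk dbl_lt //.
Qed.

Lemma pairs1_blk : pairs1 (blk x) q = [set e in M' | e \subset Y x].
Proof.
rewrite /pairs1 cover_blk; apply/setP => e; apply/idP/idP.
- case/imsetP => i _ ->.
  have hi := ltn_ord i.
  have h1 : (i.*2.+1 < #|Y x|)%N by rewrite card_blk dbl1_lt.
  have vY : nth q t i.*2.+1 \in Y x by apply: nth_Y.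
  rewrite -next_nth_mod ?t_uniq ?t_size // -alt1 //.
  rewrite inE mateP //; apply/subsetP => z /set2P [->|->] //.
  exact: comp_g.
- rewrite inE => /andP[eM eY].
  have /cards2P [y [y' [_ Ey]]] : #|e| == 2 by rewrite (match_card2 hM' eM).
  have ye : y \in e by rewrite Ey set21.
  have yY : y \in Y x by apply: (subsetP eY).
  rewrite (edge_mate hM' eM ye).
  have oddcase : forall w, w \in Y x -> m' w = next t w -> [set w; m' w] \in
      [set [set nth q t i.*2.+1; nth q t (i.*2.+2 %% size t)] | i : 'I_#|blk x|].
    move=> w wY hw.
    case: (t_index wY) => j hj Ew; rewrite card_blk in hj.
    case: (idx_split hj) => [[i hi Ej]|[i hi Ej]].
    * exfalso; rewrite Ej in Ew; move: (fg w); rewrite hw Ew alt0 //.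
      by rewrite nextS ?eqxx // card_blk dbl1_lt.
    * apply/imsetP; exists (Ordinal hi) => //=.
      rewrite hw Ew Ej next_nth_mod ?t_uniq // t_size card_blk dbl1_lt //.
  case: (t_index yY) => j hj Ey'; have hj2 := hj; rewrite card_blk in hj2.
  case: (idx_split hj2) => [[i hi Ej]|[i hi Ej]].
  +
    have hmy : m y = next t y.
      by rewrite Ey' Ej alt0 // nextS // card_blk dbl1_lt.
    case: (NXg yY) => E.
    * by exfalso; move: (fg y); rewrite hmy (Qseq_next _ q) E eqxx.
    * have wY : m' y \in Y x by apply: comp_g.
      have := oddcase _ wY; rewrite m'K (Qseq_next _ q) E => /(_ erefl).
      by rewrite setUC.
  + apply: oddcase => //.
    by rewrite Ey' Ej alt1.
Qed.

End Alt.

Lemma exists_q x : exists2 q, q \in Y x & m q = next (Qseq (Y x) q) q.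
Proof.
have xY := comp_x m m' x.
case: (NXf xY) => E.
- by exists x => //; rewrite Qseq_next E.
- exists (m x); first exact: comp_f.
  by rewrite Qseq_next E mK.
Qed.

Lemma flippable_blk x : flippable M (blk x).
Proof.
apply/and4P; split.
- exact: blk_sub.
- have xY := comp_x m m' x.
  apply: (two_blk _ (card_blk x)).
    by apply/card_gt0P; exists [set x; m x]; apply: edge_blk.
  apply/negP => /eqP c2.
  have sub : [set x; m x] \subset Y x.
    by apply/subsetP => z /set2P [->|->] //; apply: comp_f.
  have : [set x; m x] == Y x by rewrite eqEcard sub c2 cards2 eq_sym mN.
  move/eqP => E; have : m' x \in Y x by apply: comp_g.
  rewrite -E => /set2P [h|h].
  + by move: (m'N x); rewrite h eqxx.
  + by move: (fg x); rewrite h eqxx.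
- case: (exists_q x) => q qY hq.
  apply/exists_inP; exists q; first by rewrite cover_blk.
  by rewrite -pairs0_blk.
- apply/forall_inP => e; rewrite inE => /andP[enN eM].
  apply/negP => /exists_inP [y1 y1Y /exists_inP [y2 y2Y hc]].
  rewrite cover_blk in y1Y y2Y.
  have eY : forall z, z \in e -> z \notin Y x.
    move=> z ze; apply/negP => zY; move/negP: enN; apply.
    rewrite (edge_mate hM eM ze); exact: edge_blk.
  case: (sepA mK m'K eY y1Y y2Y hc) => y _ /orP [] h.
  + by move: h; apply/negP; apply: nc_all; rewrite ?eM ?mateP.
  + by move: h; apply/negP; apply: nc_all; rewrite ?eM ?mateP ?orbT.
Qed.

Lemma flip_blk x : flip (blk x) = [set e in M' | e \subset Y x].
Proof.
case: (flipE (flippable_blk x)) => q [qY E0 ->].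
rewrite cover_blk in qY.
have hq : m q = next (Qseq (Y x) q) q.
  have hpos : (0 < #|blk x|)%N.
    by apply/card_gt0P; exists [set x; m x]; apply: edge_blk; apply: comp_x.
  have : [set nth q (Qseq (Y x) q) 0.*2; nth q (Qseq (Y x) q) 0.*2.+1] \in blk x.
    rewrite E0 /pairs0 cover_blk; apply/imsetP; exists (Ordinal hpos) => //.
  rewrite /= Qseq_nth0 // => eB.
  have eM : [set q; nth q (Qseq (Y x) q) 1] \in M by move: eB; rewrite inE => /andP[].
  have := mate_in hM eM (set21 _ _); case/set2P => h; first by move: (mN q); rewrite h eqxx.
  have h1 : (0.+1 < #|Y x|)%N by rewrite card_blk; case: (#|blk x|) hpos.
  by have := @nextS x q 0 h1; rewrite Qseq_nth0 // h => ->.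
by rewrite (pairs1_blk qY hq).
Qed.

Definition Pfwd := [set blk x | x : pt].

Lemma fwd : flip_partition M M' Pfwd.
Proof.
have blkE : forall x y, y \in Y x -> blk y = blk x.
  by move=> x y yY; rewrite /blk (comp_eq mK m'K yY).
split.
- apply/and3P; split.
  + apply/eqP/setP => e; apply/bigcupP/idP.
    * by case=> N /imsetP [x _ ->]; rewrite inE => /andP[].
    * move=> eM; have /cards2P [y [y' [_ Ey]]] : #|e| == 2 by rewrite (match_card2 hM eM).
      have ye : y \in e by rewrite Ey set21.
      exists (blk y); first exact: imset_f.
      rewrite (edge_mate hM eM ye); apply: edge_blk; apply: comp_x.
  + apply/trivIsetP => A B /imsetP [x1 _ ->] /imsetP [x2 _ ->] neq.
    rewrite -setI_eq0; apply/eqP/setP => e; rewrite !inE; apply/negP.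
    case/andP => /andP [eM e1] /andP [_ e2].
    have /cards2P [y [y' [_ Ey]]] : #|e| == 2 by rewrite (match_card2 hM eM).
    have ye : y \in e by rewrite Ey set21.
    move/negP: neq; apply; apply/eqP.
    by rewrite -(blkE _ _ (subsetP e1 _ ye)) -(blkE _ _ (subsetP e2 _ ye)).
  + apply/negP => /imsetP [x _ E].
    have : [set x; m x] \in blk x by apply: edge_blk; apply: comp_x.
    by rewrite -E inE.
- by move=> N /imsetP [x _ ->]; apply: flippable_blk.
- move=> N1 N2 /imsetP [x1 _ ->] /imsetP [x2 _ ->] neq.
  rewrite !cover_blk.
  have disj : forall z, z \in Y x1 -> z \notin Y x2.
    move=> z z1; apply/negP => z2; move/negP: neq; apply; apply/eqP.
    by rewrite -(blkE _ _ z1) -(blkE _ _ z2).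
  apply/negP => /exists_inP [a aY /exists_inP [b bY /exists_inP [c cY /exists_inP [d dY hc]]]].
  rewrite crossesC in hc.
  have h1 : forall z, z \in [set c; d] -> z \notin Y x1.
    move=> z /set2P [->|->]; apply/negP => h; [move: (disj _ h) | move: (disj _ h)];
      by rewrite ?cY ?dY.
  case: (sepA mK m'K h1 aY bY hc) => y yY hy.
  have [F [FE Fsub Fc]] : exists F, [/\ (F \in M) || (F \in M'),
      (forall z, z \in F -> z \in Y x1) & crosses [set c; d] F].
    case/orP: hy => hy.
    * exists [set y; m y]; split => //; first by rewrite mateP.
      by move=> z /set2P [->|->] //; apply: comp_f.
    * exists [set y; m' y]; split => //; first by rewrite mateP ?orbT.
      by move=> z /set2P [->|->] //; apply: comp_g.
  have [y' [y'' EF]] : exists y' y'', F = [set y'; y''].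
    case/orP: FE => FE.
    * have /cards2P [u [u' [_ Eu]]] : #|F| == 2 by rewrite (match_card2 hM FE).
      by exists u, u'.
    * have /cards2P [u [u' [_ Eu]]] : #|F| == 2 by rewrite (match_card2 hM' FE).
      by exists u, u'.
  have h2 : forall z, z \in F -> z \notin Y x2 by move=> z /Fsub; apply: disj.
  rewrite EF crossesC in Fc; rewrite EF in h2.
  case: (sepA mK m'K h2 cY dY Fc) => z _ hz.
  case/orP: hz; apply/negP; apply: nc_all; rewrite ?mateP ?orbT // -EF //.
- apply/setP => f; apply/idP/bigcupP.
  + move=> fM'.
    have /cards2P [y [y' [_ Ey]]] : #|f| == 2 by rewrite (match_card2 hM' fM').
    have yf : y \in f by rewrite Ey set21.
    exists (blk y); first exact: imset_f.
    rewrite flip_blk inE fM' (edge_mate hM' fM' yf).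
    apply/subsetP => z /set2P [->|->]; [apply: comp_x | apply: comp_g; apply: comp_x].
  + by case=> N /imsetP [x _ ->]; rewrite flip_blk inE => /andP[].
Qed.

End Fwd.

Section Uniq.
Variable n : nat.
Local Notation pt := 'I_n.
Variables M M' : {set {set pt}}.
Hypotheses (hM : matching M) (hM' : matching M').
Local Notation m := (mate M).
Local Notation m' := (mate M').

Lemma comp_cover P N y : flip_partition M M' P -> N \in P -> y \in cover N ->
  comp m m' y = cover N.
Proof.
move=> hFP NP yY.
have hP : partition P M by case: hFP.
have EM' : M' = \bigcup_(N in P) flip N by case: hFP.
case: (blockF hM hFP NP) => q [qY E0 E1 NM [hsz h2]].
set t := Qseq (cover N) q.
have st : size t = #|N| * 2 by rewrite Qseq_size.
have Ut : uniq t by apply: Qseq_uniq.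
have U1 : forall z, z \in cover N -> m z \in cover N.
  move=> z /bigcupP [e eN ze]; apply/bigcupP; exists e => //.
  exact: (mate_in hM (subsetP NM _ eN) ze).
have U2 : forall z, z \in cover N -> m' z \in cover N.
  move=> z zY.
  have fM' := mateP hM' z.
  case: (M'_flip hFP fM') => N' N'P fN'.
  case: (flip_edge hM hFP N'P fN') => q' [v /andP[vY nvY] [Ef _ _ _ _]].
  have inN' : forall w, w \in [set z; m' z] -> w \in cover N'.
    by move=> w; rewrite Ef => /set2P [->|->].
  have E := partition_block hM hP NP N'P zY (inN' _ (set21 _ _)).
  by rewrite E; apply: inN'; rewrite set22.
have NX : forall j, (j < size t)%N ->
    next t (nth q t j) = m (nth q t j) \/ next t (nth q t j) = m' (nth q t j).
  move=> j; rewrite st => hj; case: (idx_split hj) => [[i hi ->]|[i hi ->]].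
  - left.
    case: (pairs_nth q hsz hi) => h1 Ej; rewrite -/t in h1 Ej.
    have eN : [set nth q t i.*2; nth q t i.*2.+1] \in N.
      by rewrite E0 /pairs0; apply/imsetP; exists (Ordinal hi).
    have := mate_in hM (subsetP NM _ eN) (set21 _ _).
    case/set2P => h; first by move: (mate_neq hM (nth q t i.*2)); rewrite h eqxx.
    by rewrite h Ej.
  - right.
    case: (pairs_nth q hsz hi) => h1 _; rewrite -/t in h1.
    have eM' : [set nth q t i.*2.+1; nth q t (i.*2.+2 %% size t)] \in M'.
      rewrite EM'; apply/bigcupP; exists N => //.
      by rewrite E1 /pairs1; apply/imsetP; exists (Ordinal hi).
    have := mate_in hM' eM' (set21 _ _).
    case/set2P => h; first by move: (mate_neq hM' (nth q t i.*2.+1)); rewrite h eqxx.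
    by rewrite h next_nth_mod.
have reach : forall j, (j < size t)%N -> nth q t j \in comp m m' (nth q t 0).
  elim => [|j IH] hj; first exact: comp_x.
  have hj' : (j < size t)%N by apply: ltnW.
  have E : nth q t j.+1 = next t (nth q t j) by rewrite next_nth_mod // modn_small.
  rewrite E; case: (NX _ hj') => ->; [apply: comp_f | apply: comp_g]; exact: IH.
have sub1 : cover N \subset comp m m' (nth q t 0).
  apply/subsetP => z zY; have zt : z \in t by rewrite Qseq_mem.
  rewrite -(nth_index q zt); apply: reach; by rewrite index_mem.
have yc : y \in comp m m' (nth q t 0) by apply: (subsetP sub1).
apply/eqP; rewrite eqEsubset; apply/andP; split.
- apply: comp_sub => // z zS _; split; [exact: U1 | exact: U2].
- by rewrite (comp_eq (mateK hM) (mateK hM') yc).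
Qed.

Lemma uniq_sub P1 P2 : flip_partition M M' P1 -> flip_partition M M' P2 ->
  P1 \subset P2.
Proof.
move=> h1 h2; have hP1 : partition P1 M by case: h1.
have hP2 : partition P2 M by case: h2.
apply/subsetP => N1 N1P.
case/and3P: (hP1) => /eqP c1 _ n1.
case/and3P: (hP2) => /eqP c2 _ _.
case: (set_0Vmem N1) => [E|[e eN1]]; first by move: n1; rewrite -E N1P.
have eM : e \in M by rewrite -c1; apply/bigcupP; exists N1.
case: (edge_e_nonempty hM eM) => z ze.
have z1 : z \in cover N1 by apply/bigcupP; exists e.
move: (eM); rewrite -c2 => /bigcupP [N2 N2P eN2].
have z2 : z \in cover N2 by apply/bigcupP; exists e.
have E : cover N1 = cover N2 by rewrite -(comp_cover h1 N1P z1) (comp_cover h2 N2P z2).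
by rewrite (block_eq hM hP1 N1P) E -(block_eq hM hP2 N2P).
Qed.

End Uniq.

Theorem mainTheorem5 (k : nat) (hk : (1 <= k)%N)
    (M M' : {set {set 'I_(k.*2)}}) :
  matching M -> matching M' ->
  (disjoint_compatible M M' <-> exists P, flip_partition M M' P) /\
  (forall P1 P2, flip_partition M M' P1 -> flip_partition M M' P2 -> P1 = P2).
Proof.
move=> hM hM'; split; first split.
- by move=> hdc; eexists; apply: (fwd hM hM' hdc).
- by case=> P hP; apply: (conv_dc hM hP).
- move=> P1 P2 h1 h2; apply/eqP; rewrite eqEsubset.
  by rewrite (uniq_sub hM hM' h1 h2) (uniq_sub hM hM' h2 h1).
Qed.
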